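(* Let $N$ be a perfect planar network in an annulus, drawn (after an isotopy) so that no internal vertex lies on the cut $\rho$, and let $\bar w_e=w_e\lambda^{\mathrm{ind}(e)}$ be the modified edge weights, so that $w_P=(-1)^{c(C_P)-1}\prod_{e\in P}\bar w_e$ for every path $P$ between boundary vertices. Regard each boundary measurement $M(i,j)$, for a source $b_i$ and a sink $b_j$, as the formal power series $\sum_P w_P$ in the commuting indeterminates $\bar w_e$, $e\in E$, with integer coefficients, the sum over all paths $P$ from $b_i$ to $b_j$. Then each boundary measurement is a rational function of the modified weights $\bar w_e$, $e\in E$ (i.e. the formal series equals the expansion of a rational function with integer coefficients).
   Context: A perfect planar network in an annulus $N=(G,\rho,w)$ consists of the following data. $G=(V,E)$ is a directed graph embedded in an annulus, considered up to isotopy relative to the boundary. Exactly $n$ of its vertices lie on the boundary circles (boundary vertices): $n_1\ge 0$ on the outer circle and $n_2=n-n_1\ge 0$ on the inner circle. Each boundary vertex is either a source (exactly one outgoing edge, no incoming edges) or a sink (exactly one incoming edge, no outgoing edges). Every internal vertex has degree $3$ and is either white (exactly one incoming edge) or black (exactly one outgoing edge). A cut $\rho$ is an oriented non-self-intersecting curve from a base point on the inner circle to a base point on the outer circle, both base points distinct from the boundary vertices, considered up to isotopy relative to its endpoints. For an oriented curve $\gamma$ with endpoints off $\rho$, $\mathrm{ind}(\gamma)$ denotes the algebraic intersection number of $\gamma$ with $\rho$. Each edge $e$ carries a weight $w_e$. A path is a sequence of edges $(e_1,\dots,e_r)$ with $e_i=(v_i,v_{i+1})$; edges may repeat. For a closed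 piecewise smooth curve $C$ without cusps, the concordance number $c(C)\in\mathbb Z/2\mathbb Z$ is its rotation number mod 2 (equivalently: approximate $C$ by a closed polygon, fix a generic oriented line $l$, and count mod 2 the pairs of consecutive segments $(e',e'')$ such that the direction vector of $l$ lies in the interior of the cone spanned by $e',e''$). For a path $P$ from a source $b'$ to a sink $b''$, $C_P$ is the closed curve obtained by appending to $P$: if $b',b''$ lie on the same circle, the counterclockwise arc of that circle from $b''$ to $b'$; otherwise, the curve going from $b''$ counterclockwise along its circle to the base point of $\rho$, then along $\rho$ to the other base point, then counterclockwise along the other circle to $b'$. The weight of $P$ is $w_P(\lambda)=(-1)^{c(C_P)-1}\lambda^{\mathrm{ind}(P)}\prod_{e\in P}w_e$ (product with multiplicity), $\lambda$ an independent variable. The boundary measurement $M(i,j)$ is the sum of $w_P$ over all paths from $b_i$ to $b_j$. *)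

(* Defs.v *)
(* Perfect planar networks in an annulus, drawn polygonally
   in the plane R^2 over an arbitrary real field R. *)
From HB Require Import structures.
From mathcomp Require Import all_boot all_order all_algebra.
Set Implicit Arguments. Unset Strict Implicit. Unset Printing Implicit Defensive.
Import Order.TTheory GRing.Theory Num.Theory.
Local Open Scope ring_scope.

Section Geometry.
Variable R : realFieldType.

Definition pt := (R * R)%type.
Definition pt0 : pt := (0, 0).
Definition psub (p q : pt) : pt := (p.1 - q.1, p.2 - q.2).
Definition cross (u v : pt) : R := u.1 * v.2 - u.2 * v.1.

Definition on_seg (p q z : pt) : Prop :=
  exists2 t : R, 0 <= t <= 1 &
    z = (p.1 + t * (q.1 - p.1), p.2 + t * (q.2 - p.2)).

(* the annulus: the region between the concentric squares of half-sides
   1 (inner boundary circle) and 2 (outer boundary circle) *)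
Definition ninf (p : pt) : R := Num.max `|p.1| `|p.2|.
Definition in_annulus (p : pt) : bool := (1 <= ninf p) && (ninf p <= 2).
Definition in_open_annulus (p : pt) : bool := (1 < ninf p) && (ninf p < 2).
Definition on_inner (p : pt) : bool := ninf p == 1.
Definition on_outer (p : pt) : bool := ninf p == 2.

Definition on_polyline (s : seq pt) (z : pt) : Prop :=
  exists2 k : nat, (k.+1 < size s)%N & on_seg (nth pt0 s k) (nth pt0 s k.+1) z.

(* non-self-intersecting polygonal line (possibly closed, i.e. a simple
   loop when its first and last points coincide) *)
Definition simple_polyline (s : seq pt) : Prop :=
  (1 < size s)%N /\
  (forall k, (k.+1 < size s)%N -> nth pt0 s k != nth pt0 s k.+1) /\
  (forall k l z, (k < l)%N -> (l.+1 < size s)%N ->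
     on_seg (nth pt0 s k) (nth pt0 s k.+1) z ->
     on_seg (nth pt0 s l) (nth pt0 s l.+1) z ->
     (l = k.+1 /\ z = nth pt0 s l) \/
     [/\ k = 0%N, l.+2 = size s, nth pt0 s 0 = last pt0 s & z = nth pt0 s 0]).

(* counterclockwise boundary parameter of a point of the square of
   half-side r, with values in [0, 8r) *)
Definition par (r : R) (p : pt) : R :=
  if (p.1 == r) && (p.2 < r) then p.2 + r
  else if (p.2 == r) && (- r < p.1) then 2 * r + (r - p.1)
  else if (p.1 == - r) && (- r < p.2) then 4 * r + (r - p.2)
  else 6 * r + (p.1 + r).

Definition corners (r : R) : seq pt := [:: (r, - r); (r, r); (- r, r); (- r, - r)].

(* the corners met strictly between a and b when going counterclockwise
   along the square of half-side r from a to b *)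
Definition arc_pts (r : R) (a b : pt) : seq pt :=
  let ta := par r a in let tb := par r b in
  if ta < tb then [seq c <- corners r | (ta < par r c) && (par r c < tb)]
  else [seq c <- corners r | ta < par r c] ++ [seq c <- corners r | par r c < tb].

(* concordance number of a closed polygon (cyclic list of corners) w.r.t.
   an oriented line with direction vector d: the number mod 2 of pairs of
   consecutive segments (e', e'') such that d lies in the interior of the
   cone spanned by e' and e''.  For u, v not collinear this interior is
   { a u + b v | a, b > 0 }, i.e. cross u d and cross d v have the sign of
   cross u v; for collinear u, v the cone has empty interior. *)
Definition in_cone (u v d : pt) : bool :=
  (0 < cross u d * cross u v) && (0 < cross d v * cross u v).

Definition pdir (c : seq pt) (i : nat) : pt :=
  psub (nth pt0 c (i.+1 %% size c)) (nth pt0 c (i %% size c)).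

Definition concordance (d : pt) (c : seq pt) : bool :=
  odd (count (fun i => in_cone (pdir c i) (pdir c i.+1) d) (iota 0 (size c))).

Definition generic_for (d : pt) (s : seq pt) : Prop :=
  forall k, (k.+1 < size s)%N -> cross d (psub (nth pt0 s k.+1) (nth pt0 s k)) != 0.

End Geometry.

Record network (R : realFieldType) (V E : finType) := Network {
  src : E -> V;
  tgt : E -> V;
  pos : V -> pt R;
  route : E -> seq (pt R);   (* interior bend points of the drawn edge *)
  white : V -> bool;
  cut : seq (pt R)           (* the cut rho, inner base point -> outer base point *)
}.

Section Network.
Variables (R : realFieldType) (V E : finType) (N : network R V E).

Definition edge_curve (e : E) : seq (pt R) :=
  pos N (src N e) :: rcons (route N e) (pos N (tgt N e)).

Definition is_bdry (v : V) : bool := on_inner (pos N v) || on_outer (pos N v).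
Definition indeg (v : V) : nat := #|[set e | tgt N e == v]|.
Definition outdeg (v : V) : nat := #|[set e | src N e == v]|.
Definition is_source (v : V) : Prop := is_bdry v /\ outdeg v = 1%N /\ indeg v = 0%N.
Definition is_sink (v : V) : Prop := is_bdry v /\ indeg v = 1%N /\ outdeg v = 0%N.

Definition base_in : pt R := head (pt0 R) (cut N).
Definition base_out : pt R := last (pt0 R) (cut N).

Definition perfect_network : Prop :=
  injective (pos N) /\
  (forall v, in_annulus (pos N v)) /\
  (forall v, is_bdry v -> is_source v \/ is_sink v) /\
  (forall v, ~~ is_bdry v ->
     (indeg v + outdeg v = 3)%N /\
     (white N v -> indeg v = 1%N) /\
     (~~ white N v -> outdeg v = 1%N)) /\
  (forall e, simple_polyline (edge_curve e)) /\
  (forall e z, on_polyline (edge_curve e) z ->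
     in_annulus z /\
     (~~ in_open_annulus z -> z = pos N (src N e) \/ z = pos N (tgt N e))) /\
  (forall e f z, e != f -> on_polyline (edge_curve e) z ->
     on_polyline (edge_curve f) z ->
     exists v, z = pos N v /\ ((v == src N e) || (v == tgt N e)) /\
                              ((v == src N f) || (v == tgt N f))) /\
  (forall v e, on_polyline (edge_curve e) (pos N v) ->
     v = src N e \/ v = tgt N e) /\
  simple_polyline (cut N) /\
  on_inner base_in /\ on_outer base_out /\
  (forall z, on_polyline (cut N) z -> z != base_in -> z != base_out ->
     in_open_annulus z) /\
  (forall v, pos N v != base_in /\ pos N v != base_out) /\
  (forall v, ~~ is_bdry v -> ~ on_polyline (cut N) (pos N v)).

(* the direction d of the oriented line l is generic: not parallel to any
   segment of the drawing (edges, cut, and the sides of the squares) *)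
Definition generic_dir (d : pt R) : Prop :=
  [/\ d.1 != 0, d.2 != 0, (forall e, generic_for d (edge_curve e))
    & generic_for d (cut N)].

Fixpoint walk (u : V) (s : seq E) (w : V) : bool :=
  if s is e :: s' then (src N e == u) && walk (tgt N e) s' w else u == w.
Definition is_path (s : seq E) (u w : V) : bool := (s != [::]) && walk u s w.

Definition path_pts (s : seq E) (w : V) : seq (pt R) :=
  flatten [seq pos N (src N e) :: route N e | e <- s] ++ [:: pos N w].

Definition closing_pts (u w : V) : seq (pt R) :=
  let a := pos N w in let b := pos N u in
  if on_inner a == on_inner b then
    arc_pts (if on_inner a then 1 else 2) a b
  else if on_inner a then
    arc_pts 1 a base_in ++ cut N ++ arc_pts 2 base_out b
  else
    arc_pts 2 a base_out ++ rev (cut N) ++ arc_pts 1 base_in b.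

Definition CP (s : seq E) (u w : V) : seq (pt R) := path_pts s w ++ closing_pts u w.

(* (-1)^(c(C_P) - 1) *)
Definition path_sign (d : pt R) (s : seq E) (u w : V) : int :=
  if concordance d (CP s u w) then 1 else -1.

End Network.

Section Series.
Variable E : finType.

Definition mono := {ffun E -> nat}.
Definition mono0 : mono := [ffun => 0%N].
Definition degm (m : mono) : nat := (\sum_e m e)%N.
Definition mult (s : seq E) : mono := [ffun e => count_mem e s].

Definition series := mono -> int.

Definition series_mul (q S : series) : series := fun m =>
  \sum_(a : {ffun E -> 'I_(degm m).+1} | [forall e, (a e <= m e)%N])
     q [ffun e => nat_of_ord (a e)] * S [ffun e => (m e - a e)%N].

Definition finsupp (f : series) : Prop :=
  exists n : nat, forall m, (n < degm m)%N -> f m = 0.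

Definition rational_series (S : series) : Prop :=
  exists p q : series, [/\ finsupp p, finsupp q, q mono0 != 0 &
                           forall m, series_mul q S m = p m].
End Series.

Definition bmeas (R : realFieldType) (V E : finType) (N : network R V E)
  (d : pt R) (u w : V) : series E := fun m =>
  \sum_(P : (degm m).-tuple E | is_path N P u w && (mult P == m))
     path_sign N d P u w.

(* Main.v *)
Require Import Defs.
From HB Require Import structures.
From mathcomp Require Import all_boot all_order all_algebra.
From Stdlib Require Import ClassicalEpsilon FunctionalExtensionality.
Set Implicit Arguments. Unset Strict Implicit. Unset Printing Implicit Defensive.
Import Order.TTheory GRing.Theory Num.Theory.
Local Open Scope ring_scope.

Lemma reindex_bij (R : Type) (idx : R) (op : Monoid.com_law idx) (I J : finType)
  (P : pred I) (Q : pred J) (F : I -> R) (G : J -> R) (h : J -> I) (h' : I -> J) :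
  (forall i, P i -> Q (h' i) /\ h (h' i) = i) ->
  (forall j, Q j -> [/\ P (h j), h' (h j) = j & F (h j) = G j]) ->
  \big[op/idx]_(i | P i) F i = \big[op/idx]_(j | Q j) G j.
Proof.
move=> H1 H2; rewrite (reindex_onto h h') => [|i Pi]; last by case: (H1 i Pi).
apply: eq_big => [j|j /andP[Pj /eqP hj]].
  apply/andP/idP => [[Pj /eqP hj]|Qj].
    by have [Q' _] := H1 _ Pj; rewrite -hj.
  by case: (H2 j Qj) => -> -> _.
have [Q' _] := H1 _ Pj; rewrite hj in Q'; by case: (H2 j Q').
Qed.

Arguments reindex_bij {R idx op I J P Q F G} h h'.

Section PS.
Variable E : finType.
Definition ps := series E.

Definition ps_eqb (f g : ps) : bool :=
  if excluded_middle_informative (f = g) then true else false.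
Lemma ps_eqP : Equality.axiom ps_eqb.
Proof. by move=> f g; rewrite /ps_eqb; case: excluded_middle_informative => h; constructor. Qed.
HB.instance Definition _ := hasDecEq.Build ps ps_eqP.

Definition ps_find (P : pred ps) (n : nat) : option ps :=
  match excluded_middle_informative (exists x, P x) with
  | left H => Some (proj1_sig (constructive_indefinite_description _ H))
  | right _ => None end.
Lemma ps_find_correct P n x : ps_find P n = Some x -> P x.
Proof.
rewrite /ps_find; case: excluded_middle_informative => // H [<-].
exact: proj2_sig (constructive_indefinite_description _ H).
Qed.
Lemma ps_find_complete (P : pred ps) : (exists x, P x) -> exists n, ps_find P n.
Proof. by move=> H; exists 0%N; rewrite /ps_find; case: excluded_middle_informative. Qed.
Lemma ps_find_ext (P Q : pred ps) : P =1 Q -> ps_find P =1 ps_find Q.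
Proof. by move=> /functional_extensionality ->. Qed.
HB.instance Definition _ := hasChoice.Build ps ps_find_correct ps_find_complete ps_find_ext.

Definition ps0 : ps := fun _ => 0.
Definition psadd (f g : ps) : ps := fun m => f m + g m.
Definition psopp (f : ps) : ps := fun m => - f m.
Lemma psaddA : associative psadd.
Proof. by move=> f g h; apply: functional_extensionality => m; rewrite /psadd addrA. Qed.
Lemma psaddC : commutative psadd.
Proof. by move=> f g; apply: functional_extensionality => m; rewrite /psadd addrC. Qed.
Lemma psadd0 : left_id ps0 psadd.
Proof. by move=> f; apply: functional_extensionality => m; rewrite /psadd add0r. Qed.
Lemma psaddN : left_inverse ps0 psopp psadd.
Proof. by move=> f; apply: functional_extensionality => m; rewrite /psadd addNr. Qed.
HB.instance Definition _ := GRing.isZmodule.Build ps psaddA psaddC psadd0 psaddN.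

Lemma coefD (f g : ps) m : (f + g) m = f m + g m. Proof. by []. Qed.
Lemma coef0 m : (0 : ps) m = 0. Proof. by []. Qed.
Lemma coefN (f : ps) m : (- f) m = - f m. Proof. by []. Qed.
Lemma coefB (f g : ps) m : (f - g) m = f m - g m. Proof. by []. Qed.
Lemma coef_sum I (r : seq I) (P : pred I) (F : I -> ps) m :
  (\sum_(i <- r | P i) F i) m = \sum_(i <- r | P i) F i m.
Proof. by apply: (big_morph (fun f : ps => f m)) => //. Qed.



Definition boxm n (a : {ffun E -> 'I_n}) : mono E := [ffun e => nat_of_ord (a e)].
Definition mle (a m : mono E) : bool := [forall e, (a e <= m e)%N].
Definition msub (m a : mono E) : mono E := [ffun e => (m e - a e)%N].
Definition madd (m a : mono E) : mono E := [ffun e => (m e + a e)%N].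

Definition sumbox n (f g : ps) (m : mono E) : int :=
  \sum_(a : {ffun E -> 'I_n} | mle (boxm a) m) f (boxm a) * g (msub m (boxm a)).

Lemma mleP (a m : mono E) : reflect (forall e, a e <= m e)%N (mle a m).
Proof. exact: forallP. Qed.

Lemma mono_le_deg (m : mono E) e : (m e <= degm m)%N.
Proof. by rewrite /degm (bigD1 e) //= leq_addr. Qed.

Lemma mul_def (f g : ps) m : series_mul f g m = sumbox (degm m).+1 f g m.
Proof.
apply: eq_big => [a|a _]; first by apply: eq_forallb => e; rewrite ffunE.
by congr (_ * g _); apply/ffunP => e; rewrite !ffunE.
Qed.

Lemma sumbox_indep n1 n2 f g (m : mono E) :
  (forall e, m e < n1.+1)%N -> (forall e, m e < n2.+1)%N ->
  sumbox n1.+1 f g m = sumbox n2.+1 f g m.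
Proof.
move=> H1 H2; rewrite /sumbox.
apply: (reindex_bij (fun a : {ffun E -> 'I_n2.+1} => [ffun e => inord (a e)] : {ffun E -> 'I_n1.+1})
   (fun a : {ffun E -> 'I_n1.+1} => [ffun e => inord (a e)] : {ffun E -> 'I_n2.+1})).
- move=> a /mleP Ha; have {}Ha e : (a e <= m e)%N by have := Ha e; rewrite ffunE.
  have A1 e : (a e < n1.+1)%N by exact: (leq_ltn_trans (Ha e)).
  have A2 e : (a e < n2.+1)%N by exact: (leq_ltn_trans (Ha e)).
  have Hb : boxm ([ffun e => inord (a e)] : {ffun E -> 'I_n2.+1}) = boxm a.
    by apply/ffunP => e; rewrite !ffunE inordK.
  split; first by rewrite Hb; apply/mleP => e; rewrite ffunE.
  by apply/ffunP => e; apply/val_inj; rewrite !ffunE /= !inordK.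
- move=> j /mleP Hj; have {}Hj e : (j e <= m e)%N by have := Hj e; rewrite ffunE.
  have A1 e : (j e < n1.+1)%N by exact: (leq_ltn_trans (Hj e)).
  have A2 e : (j e < n2.+1)%N by exact: (leq_ltn_trans (Hj e)).
  have Hb : boxm ([ffun e => inord (j e)] : {ffun E -> 'I_n1.+1}) = boxm j.
    by apply/ffunP => e; rewrite !ffunE inordK.
  split; first by rewrite Hb; apply/mleP => e; rewrite ffunE.
    by apply/ffunP => e; apply/val_inj; rewrite !ffunE /= !inordK.
  by rewrite Hb.
Qed.

Lemma mulE n f g (m : mono E) : (forall e, m e < n.+1)%N ->
  series_mul f g m = sumbox n.+1 f g m.
Proof.
move=> H; rewrite mul_def; apply: sumbox_indep => // e; rewrite ltnS; exact: mono_le_deg.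
Qed.

Definition ps1 : ps := fun m => (m == mono0 E)%:R.
Definition psmul (f g : ps) : ps := series_mul f g.

Lemma mlebP n (a : {ffun E -> 'I_n}) (m : mono E) : reflect (forall e, a e <= m e)%N (mle (boxm a) m).
Proof. by apply: (iffP (mleP _ _)) => H e; have := H e; rewrite ffunE. Qed.

Lemma psmulC : commutative psmul.
Proof.
move=> f g; apply: functional_extensionality => m; rewrite /psmul !mul_def /sumbox.
set n := degm m.
have Hm e : (m e < n.+1)%N by rewrite ltnS mono_le_deg.
have [h hv] : {h : {ffun E -> 'I_n.+1} -> {ffun E -> 'I_n.+1} |
    forall a e, (h a e : nat) = (m e - a e)%N}.
  exists (fun a : {ffun E -> 'I_n.+1} => [ffun e => inord (m e - a e)] : {ffun E -> 'I_n.+1}) => a e.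
  by rewrite ffunE inordK //; exact: leq_ltn_trans (leq_subr _ _) (Hm e).
have hh a : mle (boxm a) m -> [/\ mle (boxm (h a)) m, h (h a) = a,
   boxm (h a) = msub m (boxm a) & msub m (boxm (h a)) = boxm a].
  move=> /mlebP Ha; split.
  - by apply/mlebP => e; move: (hv a e) => ->; rewrite leq_subr.
  - by apply/ffunP => e; apply/val_inj; rewrite /= hv hv subKn.
  - by apply/ffunP => e; rewrite !ffunE hv.
  - by apply/ffunP => e; rewrite !ffunE hv subKn.
apply: (reindex_bij h h).
- by move=> a Ha; case: (hh a Ha).
- by move=> a Ha; case: (hh a Ha) => -> -> -> ->; rewrite mulrC.
Qed.

Lemma ps1_boxm n (a : {ffun E -> 'I_n}) : ps1 (boxm a) = (boxm a == mono0 E)%:R.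
Proof. by []. Qed.

Lemma psmul1 : left_id ps1 psmul.
Proof.
move=> f; apply: functional_extensionality => m; rewrite /psmul mul_def /sumbox.
set n := degm m.
pose a0 : {ffun E -> 'I_n.+1} := [ffun => ord0].
have b0 : boxm a0 = mono0 E by apply/ffunP => e; rewrite !ffunE.
rewrite (bigD1 a0) /=; last by apply/mlebP => e; rewrite ffunE.
rewrite big1 ?addr0.
  rewrite b0 /ps1 eqxx mul1r; congr f; by apply/ffunP => e; rewrite !ffunE subn0.
move=> a /andP[_ na]; rewrite /ps1.
case: eqP => [Hb|]; last by rewrite mul0r.
case/eqP: na; apply/ffunP => e; apply/val_inj.
by have := congr1 (fun x : mono E => x e) Hb; rewrite !ffunE.
Qed.

Lemma psmulDl : left_distributive psmul (@GRing.add ps).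
Proof.
move=> f g h; apply: functional_extensionality => m; rewrite coefD /psmul !mul_def /sumbox.
by rewrite -big_split; apply: eq_bigr => a _; rewrite coefD mulrDl.
Qed.

Lemma psmulA : associative psmul.
Proof.
move=> f g h; apply: functional_extensionality => m; rewrite /psmul; symmetry.
set n := degm m.
have Hm e : (m e < n.+1)%N by rewrite ltnS mono_le_deg.
have Hc (c : {ffun E -> 'I_n.+1}) : mle (boxm c) m -> forall e, (boxm c e < n.+1)%N.
  by move=> /mlebP Hc e; rewrite ffunE; exact: leq_ltn_trans (Hc e) (Hm e).
have Ha (a : {ffun E -> 'I_n.+1}) : forall e, (msub m (boxm a) e < n.+1)%N.
  by move=> e; rewrite ffunE; exact: leq_ltn_trans (leq_subr _ _) (Hm e).
rewrite [LHS](mulE _ _ Hm) [RHS](mulE _ _ Hm) /sumbox.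
transitivity (\sum_(c : {ffun E -> 'I_n.+1} | mle (boxm c) m)
   \sum_(a : {ffun E -> 'I_n.+1} | mle (boxm a) (boxm c))
      f (boxm a) * g (msub (boxm c) (boxm a)) * h (msub m (boxm c))).
  apply: eq_bigr => c Hc'; rewrite (mulE _ _ (Hc c Hc')) /sumbox mulr_suml.
  by [].
rewrite (exchange_big_dep (fun a : {ffun E -> 'I_n.+1} => mle (boxm a) m)) /=; last first.
  move=> c a /mlebP H1 /mlebP H2; apply/mlebP => e.
  by apply: leq_trans (H2 e) _; have := H1 e; rewrite ffunE.
apply: eq_bigr => a /mlebP Hle.
rewrite (mulE _ _ (Ha a)) /sumbox mulr_sumr.
have [hh hv] : {hh : {ffun E -> 'I_n.+1} -> {ffun E -> 'I_n.+1} |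
    forall b e, mle (boxm b) (msub m (boxm a)) -> (hh b e : nat) = (a e + b e)%N}.
  exists (fun b : {ffun E -> 'I_n.+1} => [ffun e => inord (a e + b e)] : {ffun E -> 'I_n.+1}).
  move=> b' e /mlebP Hb; rewrite ffunE inordK //.
  apply: leq_ltn_trans (Hm e); have := Hb e; rewrite !ffunE.
  by rewrite (leq_subRL _ (Hle e)).
have [hh' hv'] : {hh' : {ffun E -> 'I_n.+1} -> {ffun E -> 'I_n.+1} |
    forall c e, (hh' c e : nat) = (c e - a e)%N}.
  exists (fun b : {ffun E -> 'I_n.+1} => [ffun e => inord (b e - a e)] : {ffun E -> 'I_n.+1}).
  move=> b' e; rewrite ffunE inordK //.
  exact: leq_ltn_trans (leq_subr _ _) (ltn_ord _).
apply: (reindex_bij hh hh').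
- move=> c /andP[/mlebP H1 /mlebP H2].
  have Q : mle (boxm (hh' c)) (msub m (boxm a)).
    by apply/mlebP => e; move: (hv' c e) => ->; rewrite ffunE ffunE leq_sub2r.
  split => //.
  apply/ffunP => e; apply/val_inj => /=; move: (hv (hh' c) e Q) => ->.
  by move: (hv' c e) => ->; rewrite subnKC //; have := H2 e; rewrite ffunE.
- move=> b Hb; have Hb' := Hb; move/mlebP: Hb' => Hb'.
  have {}Hb' e : (b e <= m e - a e)%N by have := Hb' e; rewrite !ffunE.
  have hE e : (hh b e : nat) = (a e + b e)%N by exact: hv.
  have Bh : boxm (hh b) = madd (boxm a) (boxm b) by apply/ffunP => e; rewrite !ffunE hE.
  split.
  + apply/andP; split; apply/mlebP => e.
      by change (nat_of_ord (hh b e) <= m e)%N; rewrite hE -leq_subRL.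
    by rewrite Bh ffunE !ffunE leq_addr.
  + by apply/ffunP => e; apply/val_inj => /=; rewrite hv' hE addKn.
  + rewrite Bh -mulrA; congr (_ * (g _ * h _)); apply/ffunP => e; rewrite !ffunE.
      by rewrite addKn.
    by rewrite subnDA.
Qed.

Lemma ps1_neq0 : ps1 != 0.
Proof.
apply/eqP => H; have := congr1 (fun f : ps => f (mono0 E)) H.
by rewrite /ps1 eqxx coef0.
Qed.

HB.instance Definition _ := GRing.Zmodule_isComNzRing.Build ps psmulA psmulC psmul1 psmulDl ps1_neq0.

Lemma coefM (f g : ps) m : (f * g) m = series_mul f g m. Proof. by []. Qed.
Lemma coef1 m : (1 : ps) m = (m == mono0 E)%:R. Proof. by []. Qed.

End PS.

Section PSTheory.
Variable E : finType.
Local Notation ps := (ps E).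
Local Notation mono := (mono E).

Lemma degm0 : degm (mono0 E) = 0%N.
Proof. by rewrite /degm big1 // => e _; rewrite ffunE. Qed.

Lemma degm_eq0 (m : mono) : degm m = 0%N -> m = mono0 E.
Proof.
move=> H; apply/ffunP => e; rewrite ffunE; apply/eqP; rewrite -leqn0 -H.
exact: mono_le_deg.
Qed.

Lemma degm_sub (a m : mono) : mle a m -> degm (msub m a) = (degm m - degm a)%N.
Proof.
move=> /mleP H; apply/eqP; rewrite -(eqn_add2r (degm a)) subnK; last first.
  by apply: leq_sum => e _; apply: H.
by rewrite /degm -big_split /=; apply/eqP/eq_bigr => e _; rewrite ffunE subnK.
Qed.

Lemma coef_natmul (f : ps) k m : (f *+ k) m = f m *+ k.
Proof. by elim: k => [|k IH]; rewrite ?mulr0n // !mulrS coefD IH. Qed.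

Lemma coef_intmul (f : ps) (c : int) m : (f *~ c) m = f m *~ c.
Proof.
case: c => k; first by rewrite -!pmulrn coef_natmul.
by rewrite !NegzE !mulrNz coefN -!pmulrn coef_natmul.
Qed.

Lemma coef_zmul (c : int) (g : ps) m : ((c%:~R : ps) * g) m = c * g m.
Proof. by rewrite mulrzl coef_intmul -mulrzl intz. Qed.

Definition finsupp' (f : ps) := finsupp f.

Lemma fs0 : finsupp (0 : ps). Proof. by exists 0%N. Qed.
Lemma fs1 : finsupp (1 : ps).
Proof.
exists 0%N => m Hm; rewrite coef1; case: eqP => // Hm0.
by move: Hm; rewrite Hm0 degm0.
Qed.
Lemma fsD (f g : ps) : finsupp f -> finsupp g -> finsupp (f + g).
Proof.
move=> [n1 H1] [n2 H2]; exists (maxn n1 n2) => m Hm.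
rewrite coefD H1 ?H2 ?addr0 //; apply: leq_ltn_trans Hm;
  [exact: leq_maxr | exact: leq_maxl].
Qed.
Lemma fsN (f : ps) : finsupp f -> finsupp (- f).
Proof. by move=> [n H]; exists n => m Hm; rewrite coefN H ?oppr0. Qed.
Lemma fsM (f g : ps) : finsupp f -> finsupp g -> finsupp (f * g).
Proof.
move=> [n1 H1] [n2 H2]; exists (n1 + n2)%N => m Hm.
rewrite coefM mul_def /sumbox big1 // => a Ha.
case: (leqP (degm (boxm a)) n1) => Hd; last by rewrite H1 // mul0r.
rewrite H2 ?mulr0 // degm_sub //.
by rewrite ltn_subRL; apply: leq_ltn_trans Hm; rewrite leq_add2r.
Qed.
Lemma fsX (f : ps) k : finsupp f -> finsupp (f ^+ k).
Proof. by move=> H; elim: k => [|k IH]; [exact: fs1 | rewrite exprS; exact: fsM]. Qed.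

Lemma fs_sum I (r : seq I) (P : pred I) (F : I -> ps) :
  (forall i, P i -> finsupp (F i)) -> finsupp (\sum_(i <- r | P i) F i).
Proof. move=> H; apply: big_ind => //; [exact: fs0 | exact: fsD]. Qed.
Lemma fs_prod I (r : seq I) (P : pred I) (F : I -> ps) :
  (forall i, P i -> finsupp (F i)) -> finsupp (\prod_(i <- r | P i) F i).
Proof. move=> H; apply: big_ind => //; [exact: fs1 | exact: fsM]. Qed.

Lemma fs_det n (A : 'M[ps]_n) : (forall i j, finsupp (A i j)) -> finsupp (\det A).
Proof.
move=> H; rewrite /determinant; apply: fs_sum => s _; apply: fsM.
  by apply: fsX; apply: fsN; exact: fs1.
by apply: fs_prod => i _.
Qed.

Definition c0 (f : ps) : int := f (mono0 E).

Lemma c0M (f g : ps) : c0 (f * g) = c0 f * c0 g.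
Proof.
rewrite /c0 coefM mul_def /sumbox degm0.
pose a0 : {ffun E -> 'I_1} := [ffun => ord0].
have b0 : boxm a0 = mono0 E by apply/ffunP => e; rewrite !ffunE.
rewrite (bigD1 a0) /=; last by apply/mlebP => e; rewrite ffunE.
rewrite big1 ?addr0.
  rewrite b0; congr (_ * g _); by apply/ffunP => e; rewrite !ffunE.
move=> a /andP[_ na]; case/eqP: na; apply/ffunP => e; apply/val_inj.
by rewrite ffunE; case: (a e) => [[]].
Qed.
Lemma c01 : c0 1 = 1. Proof. by rewrite /c0 coef1 eqxx. Qed.
Lemma c0D (f g : ps) : c0 (f + g) = c0 f + c0 g. Proof. by []. Qed.
Lemma c0N (f : ps) : c0 (- f) = - c0 f. Proof. by []. Qed.

Lemma c0X (f : ps) k : c0 (f ^+ k) = c0 f ^+ k.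
Proof. by elim: k => [|k IH]; rewrite ?expr0 ?c01 // !exprS c0M IH. Qed.

Lemma c0_det n (A : 'M[ps]_n) : c0 (\det A) = \det (map_mx c0 A).
Proof.
rewrite /determinant (big_morph c0 c0D (erefl (c0 0))).
apply: eq_bigr => s _; rewrite c0M (big_morph c0 c0M c01).
congr (_ * _); last by apply: eq_bigr => i _; rewrite mxE.
by rewrite c0X c0N c01.
Qed.

Definition delta (e : E) : mono := [ffun e' => nat_of_bool (e' == e)].
Definition xvar (e : E) : ps := fun m => (m == delta e)%:R.

Lemma degm_delta e : degm (delta e) = 1%N.
Proof.
rewrite /degm (bigD1 e) //= big1 ?ffunE ?eqxx // => e' /negbTE ne.
by rewrite ffunE ne.
Qed.

Lemma fs_xvar e : finsupp (xvar e).
Proof.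
exists 1%N => m Hm; rewrite /xvar; case: eqP => // Hd.
by move: Hm; rewrite Hd degm_delta.
Qed.

Lemma c0_xvar e : c0 (xvar e) = 0.
Proof.
rewrite /c0 /xvar; case: eqP => // H.
by have := congr1 (fun x : mono => x e) H; rewrite !ffunE eqxx.
Qed.

Lemma coef_xvarM e (g : ps) m :
  (xvar e * g) m = if (0 < m e)%N then g (msub m (delta e)) else 0.
Proof.
set n := degm m.
have Hm e' : (m e' < n.+2)%N by rewrite ltnS; apply: leqW; exact: mono_le_deg.
rewrite coefM (mulE _ _ Hm) /sumbox.
case: ifP => Hme.
  pose a1 : {ffun E -> 'I_n.+2} := [ffun e' => inord (nat_of_bool (e' == e))].
  have b1 : boxm a1 = delta e by apply/ffunP => e'; rewrite !ffunE inordK //; case: (e' == e).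
  rewrite (bigD1 a1) /=; last first.
    by rewrite b1; apply/mleP => e'; rewrite ffunE; case: eqP => [->|].
  rewrite big1 ?addr0; first by rewrite b1 /xvar eqxx mul1r.
  move=> a /andP[_ na]; rewrite /xvar; case: eqP; last by rewrite mul0r.
  rewrite -b1 => Hb; case/eqP: na; apply/ffunP => e'; apply/val_inj.
  by have := congr1 (fun x : mono => x e') Hb; rewrite !ffunE.
rewrite big1 // => a /mleP Ha; rewrite /xvar; case: eqP => [Hb|]; last by rewrite mul0r.
by have := Ha e; rewrite Hb ffunE eqxx /= Hme.
Qed.

End PSTheory.

Lemma sum_tuple_cons (E : finType) k (F : seq E -> int) :
  \sum_(t : k.+1.-tuple E) F t = \sum_(x : E) \sum_(t : k.-tuple E) F (x :: t).
Proof.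
rewrite pair_bigA /=.
pose h := fun p : E * k.-tuple E => [tuple of p.1 :: p.2].
have Hb : {on [pred i | true], bijective h}.
  exists (fun t : k.+1.-tuple E => (thead t, [tuple of behead t])) => [[x t] _|t _].
    by rewrite /h /= theadE; congr (_, _); apply/val_inj.
  by rewrite [in RHS](tuple_eta t); apply/val_inj.
by rewrite (reindex h Hb).
Qed.

Section Walks.
Variables (E : finType) (al : E -> int) (A : E -> E -> int) (be : E -> int).
Local Notation ps := (ps E).

Fixpoint chain (x : E) (s : seq E) : int :=
  if s is y :: s' then A x y * chain y s' else be x.
Definition Wt (s : seq E) : int := if s is x :: s' then al x * chain x s' else 0.
Definition hw (e : E) (s : seq E) : int :=
  if s is x :: s' then (x == e)%:R * chain x s' else 0.
Definition Gn (e : E) (n : nat) (m : mono E) : int :=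
  \sum_(t : n.-tuple E) (mult t == m)%:R * hw e t.
Definition Gs (e : E) : ps := fun m => Gn e (degm m) m.
Definition Ws : ps := fun m => \sum_(P : (degm m).-tuple E | mult P == m) Wt P.

Lemma mult_cons x (s : seq E) : mult (x :: s) = madd (delta x) (mult s).
Proof. by apply/ffunP => e; rewrite !ffunE /= eq_sym. Qed.

Lemma mult_consE e (t : seq E) m :
  (mult (e :: t) == m) = (0 < m e)%N && (mult t == msub m (delta e)).
Proof.
rewrite mult_cons; apply/eqP/andP => [<-|[H /eqP ->]].
  by split; [rewrite !ffunE eqxx | apply/eqP/ffunP => e'; rewrite !ffunE addKn].
apply/ffunP => e'; rewrite !ffunE; case: eqP => [->|] /=; last by rewrite subn0.
by rewrite add1n subn1 prednK.
Qed.

Lemma chain_split e (t : seq E) :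
  chain e t = (t == [::])%:R * be e + \sum_e' A e e' * hw e' t.
Proof.
case: t => [|y t] /=.
  by rewrite big1 ?addr0 ?mul1r // => e' _; rewrite mulr0.
rewrite mul0r add0r (bigD1 y) //= eqxx mul1r big1 ?addr0 // => e' /negbTE ne.
by rewrite eq_sym ne mul0r mulr0.
Qed.

Lemma Gn_succ e n m : Gn e n.+1 m =
  if (0 < m e)%N then \sum_(t : n.-tuple E) (mult t == msub m (delta e))%:R * chain e t
  else 0.
Proof.
rewrite /Gn (sum_tuple_cons n (fun s : seq E => (mult s == m)%:R * hw e s)) (bigD1 e) //= [X in _ + X]big1 ?addr0; last first.
  move=> x ne; apply: big1 => t _; by rewrite /= (negbTE ne) mul0r mulr0.
under eq_bigr => t _ do rewrite /= eqxx mul1r mult_consE.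
case: ifP => H //; apply: big1 => t _; by rewrite /= mul0r.
Qed.

Lemma Gn0 e m : Gn e 0 m = 0.
Proof. by apply: big1 => t _; rewrite (tuple0 t) /= mulr0. Qed.

Lemma coef_int (c : int) (m : mono E) : (c%:~R : ps) m = c * (m == mono0 E)%:R.
Proof. by rewrite coef_intmul coef1 -mulrzr intz mulrC. Qed.

Lemma Gs_rec e : Gs e = xvar e * ((be e)%:~R + \sum_e' (A e e')%:~R * Gs e').
Proof.
apply: functional_extensionality => m; rewrite coef_xvarM /Gs.
case Hd: (degm m) => [|n].
  rewrite Gn0; case: ifP => // H.
  by move: H; rewrite (degm_eq0 Hd) ffunE.
rewrite Gn_succ; case: ifP => H //.
set m' := msub m (delta e).
have Hle : mle (delta e) m by apply/mleP => e'; rewrite ffunE; case: eqP => [->|].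
have Hd' : degm m' = n by rewrite degm_sub // Hd degm_delta subn1.
rewrite coefD coef_sum coef_int.
under [in RHS]eq_bigr => e' _ do rewrite coef_zmul /Gs Hd'.
under [LHS]eq_bigr => t _ do rewrite chain_split mulrDr.
rewrite big_split /=; congr (_ + _).
  case: n Hd Hd' => [|n] Hd Hd'.
    rewrite (bigD1 [tuple]) //= big1 ?addr0; last first.
      by move=> t /negP[]; rewrite (tuple0 t).
    by rewrite (degm_eq0 Hd') eqxx /= mul1r mulrC; congr (_ * _%:R); apply/ffunP => x; rewrite !ffunE.
  rewrite big1; last by move=> t _; rewrite (_ : (t == [::] :> seq E) = false) ?mul0r ?mulr0 //;
     case: t => [[|]].
  case: eqP => [H0|]; last by rewrite mulr0.
  by move: Hd'; rewrite H0 degm0.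
under [LHS]eq_bigr => t _ do rewrite mulr_sumr.
rewrite /Gn exchange_big /=; apply: eq_bigr => e' _; rewrite mulr_sumr.
by apply: eq_bigr => t _; rewrite mulrCA.
Qed.

Lemma Ws_sum : Ws = \sum_e (al e)%:~R * Gs e.
Proof.
apply: functional_extensionality => m; rewrite coef_sum /Ws.
under [in RHS]eq_bigr => e _ do rewrite coef_zmul /Gs /Gn mulr_sumr.
rewrite exchange_big /= big_mkcond /=; apply: eq_bigr => t _.
case: eqP => _; last by rewrite big1 // => e _; rewrite mul0r mulr0.
case: (tval t) => [|x s] /=; first by rewrite big1 // => e _; rewrite !mulr0.
rewrite (bigD1 x) //= eqxx !mul1r [X in _ + X]big1 ?addr0 // => e ne.
by rewrite eq_sym (negbTE ne) !mul0r !mulr0.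
Qed.

End Walks.

Section Rat.
Variables (E : finType) (al : E -> int) (A : E -> E -> int) (be : E -> int).
Local Notation ps := (ps E).
Local Notation n := #|E|.

Definition gv : 'cV[ps]_n := \col_i Gs A be (enum_val i).
Definition Mx : 'M[ps]_n :=
  \matrix_(i, j) (xvar (enum_val i) * (A (enum_val i) (enum_val j))%:~R).
Definition bv : 'cV[ps]_n := \col_i (xvar (enum_val i) * (be (enum_val i))%:~R).

Lemma sum_enum (F : E -> ps) : \sum_(i < n) F (enum_val i) = \sum_e F e.
Proof. by rewrite -(big_enum_val F); apply: eq_bigl => e; rewrite inE. Qed.

Lemma gv_eq : gv = bv + Mx *m gv.
Proof.
apply/matrixP => i k; rewrite (ord1 k) !mxE.
under eq_bigr => j _ do rewrite !mxE -mulrA.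
rewrite -mulr_sumr (sum_enum (fun e => (A (enum_val i) e)%:~R * Gs A be e)).
by rewrite -mulrDr -Gs_rec.
Qed.

Lemma sys_eq : (1%:M - Mx) *m gv = bv.
Proof. by rewrite mulmxBl mul1mx {1}gv_eq addrK. Qed.

Definition Dq : ps := \det (1%:M - Mx).

Lemma Dq_Ws : Dq * Ws al A be =
  \sum_(i < n) (al (enum_val i))%:~R * ((\adj (1%:M - Mx) *m bv) i 0).
Proof.
rewrite Ws_sum -(sum_enum (fun e => (al e)%:~R * Gs A be e)) mulr_sumr.
apply: eq_bigr => i _.
rewrite -sys_eq mulmxA mul_adj_mx mul_scalar_mx mxE /gv mxE.
by rewrite mulrCA.
Qed.

Lemma fs_natmul k : finsupp (k%:R : ps).
Proof. by elim: k => [|k IH]; [exact: fs0 | rewrite mulrS; apply: fsD => //; exact: fs1]. Qed.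

Lemma fs_int (c : int) : finsupp (c%:~R : ps).
Proof.
exists 0%N => m Hm; rewrite coef_int; case: eqP => [H|]; last by rewrite mulr0.
by move: Hm; rewrite H degm0.
Qed.

Lemma fs_IMe k e (c : int) : finsupp ((k%:R : ps) - xvar e * c%:~R).
Proof.
apply: fsD; first exact: fs_natmul.
by apply: fsN; apply: fsM; [exact: fs_xvar | exact: fs_int].
Qed.

Lemma fs_IM i j : finsupp ((1%:M - Mx) i j).
Proof. rewrite !mxE; exact: fs_IMe. Qed.

Lemma fs_num : finsupp (Dq * Ws al A be).
Proof.
rewrite Dq_Ws; apply: fs_sum => i _; apply: fsM; first exact: fs_int.
rewrite mxE; apply: fs_sum => j _; apply: fsM; last by rewrite mxE; apply: fsM;
  [exact: fs_xvar | exact: fs_int].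
rewrite mxE /cofactor; apply: fsM.
  by apply: fsX; apply: fsN; exact: fs1.
by apply: fs_det => k l; rewrite !mxE; exact: fs_IMe.
Qed.

Lemma c0_Dq : c0 Dq = 1.
Proof.
rewrite /Dq c0_det (_ : map_mx (@c0 E) (1%:M - Mx) = 1%:M) ?det1 //.
apply/matrixP => k l; rewrite !mxE c0D c0N c0M c0_xvar mul0r subr0.
by rewrite /c0 coef_natmul coef1 eqxx.
Qed.

Lemma Ws_rational : rational_series (Ws al A be).
Proof.
exists (Dq * Ws al A be), Dq; split.
- exact: fs_num.
- by apply: fs_det => k l; exact: fs_IM.
- by have := c0_Dq; rewrite /c0 => ->.
- by [].
Qed.

End Rat.

Section Geo.
Variables (R : realFieldType) (V E : finType) (N : network R V E) (d : pt R) (u w : V).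
Local Notation pt := (pt R).
Local Notation p0 := (pt0 R).

Definition f3 (a b c : pt) : bool := in_cone (psub b a) (psub c b) d.
Definition h3 (x : pt) (l : seq pt) : nat := if l is y :: z :: _ then f3 x y z else 0%N.
Fixpoint trip (l : seq pt) : nat := if l is x :: l' then (h3 x l' + trip l')%N else 0%N.

Lemma trip_nth l : trip l =
  count (fun i => f3 (nth p0 l i) (nth p0 l i.+1) (nth p0 l i.+2)) (iota 0 (size l - 2)).
Proof.
elim: l => [|x l IH] //.
case: l IH => [|y [|z l]] IH //.
change (trip [:: x, y, z & l]) with (f3 x y z + trip [:: y, z & l])%N.
rewrite IH /= !subSS subn0.
rewrite (_ : iota 1 (size l) = map (addn 1) (iota 0 (size l))); last by rewrite -iotaDl.
by rewrite count_map; congr (_ + _)%N; apply: eq_count => i /=; rewrite add1n.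
Qed.

Lemma nth_wrap (c : seq pt) j : (2 <= size c)%N -> (j < (size c).+2)%N ->
  nth p0 (c ++ take 2 c) j = nth p0 c (j %% size c).
Proof.
move=> Hc Hj; rewrite nth_cat; case: ltnP => H; first by rewrite modn_small.
rewrite nth_take; last by rewrite (ltn_subLR _ H) addn2.
have -> : j = (j - size c + size c)%N by rewrite subnK.
rewrite modnDr modn_small ?addnK //.
by rewrite (ltn_subLR _ H); apply: leq_trans Hj _; rewrite -addn2 leq_add2l.
Qed.

Lemma concordance_trip (c : seq pt) : (2 <= size c)%N ->
  concordance d c = odd (trip (c ++ take 2 c)).
Proof.
move=> Hc; rewrite /concordance trip_nth size_cat size_take.
rewrite (_ : (if 2 < size c then 2 else size c) = 2)%N; last first.
  by case: ltnP => // H; apply/eqP; rewrite eqn_leq H Hc.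
rewrite addnK; congr odd; apply: eq_in_count => i; rewrite mem_iota add0n => /andP[_ Hi].
have H1 : (i < (size c).+2)%N by apply: leq_trans Hi _; apply: leqW.
have H2 : (i.+1 < (size c).+2)%N by apply: ltnW.
have H3 : (i.+2 < (size c).+2)%N by [].
by rewrite /f3 /pdir !nth_wrap.
Qed.

Lemma trip_cat a l : trip (a ++ l) = (trip (a ++ take 2 l) + trip l)%N.
Proof.
elim: a => [|x a IH] /=; first by case: l => [|p [|q l]] /=; rewrite ?take0 /h3 /= ?addn0 ?add0n.
rewrite IH addnA; congr (_ + _)%N; congr (_ + _)%N.
by case: a {IH} => [|y [|z a]]; case: l => [|p [|q l]].
Qed.

Definition Bk (e : E) : seq pt := pos N (src N e) :: route N e.
Definition Xc (e : E) : seq pt := edge_curve N e.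
Definition sec (e : E) : pt := nth p0 (Xc e) 1.
Definition Jw (e e' : E) : nat := trip (Xc e ++ [:: sec e']).
Fixpoint Jsum (e : E) (s : seq E) : nat :=
  if s is e' :: s' then (Jw e e' + Jsum e' s')%N else 0%N.

Lemma block e y r : trip (Bk e ++ pos N (tgt N e) :: y :: r) =
  (trip (Xc e ++ [:: y]) + trip (pos N (tgt N e) :: y :: r))%N.
Proof.
rewrite trip_cat; congr (_ + _)%N; congr trip.
by rewrite /Bk /Xc /edge_curve /= take0 cat_rcons.
Qed.

Lemma rest_head (s : seq E) (e : E) Z : walk N (tgt N e) s w ->
  exists r, flatten [seq Bk x | x <- s] ++ pos N w :: Z = pos N (tgt N e) :: r.
Proof.
case: s => [|x s] /=; first by move/eqP => ->; exists Z.
by case/andP => /eqP <- _; rewrite /Bk /=; eexists.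
Qed.

Lemma block2 (e : E) (s : seq E) Z : walk N (tgt N e) s w ->
  exists r, flatten [seq Bk x | x <- e :: s] ++ pos N w :: Z =
            pos N (src N e) :: sec e :: r.
Proof.
move=> H; have [r Hr] := rest_head Z H.
rewrite /= -catA Hr /sec /Xc /edge_curve /Bk /=.
by case: (route N e) => [|q rt] /=; eexists.
Qed.

Lemma walk_trip (s : seq E) (e : E) z Z : walk N (tgt N e) s w ->
  trip (flatten [seq Bk x | x <- e :: s] ++ pos N w :: z :: Z) =
  (Jsum e s + trip (Xc (last e s) ++ [:: z]) + trip (pos N w :: z :: Z))%N.
Proof.
elim: s e => [|e' s IH] e.
  move/eqP => Ht; change (flatten [seq Bk x | x <- [:: e]]) with (Bk e ++ [::]).
  by rewrite cats0 -Ht block.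
case/andP => /eqP He' Hw.
have [r Hr] := block2 (z :: Z) Hw.
change (flatten [seq Bk x | x <- [:: e, e' & s]]) with (Bk e ++ flatten [seq Bk x | x <- e' :: s]).
rewrite -catA Hr He' block -He' -Hr IH //.
change (Jsum e (e' :: s)) with (Jw e e' + Jsum e' s)%N.
change (last e (e' :: s)) with (last e' s).
by rewrite /Jw !addnA.
Qed.

Definition Cl : seq pt := closing_pts N u w.
Definition K0 (e : E) : nat := trip (pos N w :: Cl ++ [:: pos N (src N e); sec e]).
Definition Lz : pt := head (pos N u) Cl.
Definition Lw (e : E) : nat := trip (Xc e ++ [:: Lz]).

Lemma path_count (e : E) (s : seq E) : src N e = u -> walk N (tgt N e) s w ->
  concordance d (CP N (e :: s) u w) = odd (Jsum e s + Lw (last e s) + K0 e).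
Proof.
move=> Hu Hw.
have [r Hr] := block2 Cl Hw.
have Ec : CP N (e :: s) u w = flatten [seq Bk x | x <- e :: s] ++ pos N w :: Cl.
  by rewrite /CP /path_pts -catA.
rewrite Ec concordance_trip; last by rewrite Hr.
have T2 : take 2 (pos N (src N e) :: sec e :: r) = [:: pos N (src N e); sec e] by rewrite /= take0.
rewrite [X in take 2 X]Hr T2 -catA cat_cons.
have [z [Z HZ]] : exists z Z, Cl ++ [:: pos N (src N e); sec e] = z :: Z /\ z = Lz.
  by rewrite /Lz -Hu; case: Cl => [|q Cl'] /=; do 2 eexists.
by case: HZ => HZ Hz; rewrite HZ walk_trip // /Lw /K0 HZ -Hz.
Qed.

Definition alw (e : E) : int := if src N e == u then - (-1) ^+ K0 e else 0.
Definition Aw (e e' : E) : int := if tgt N e == src N e' then (-1) ^+ Jw e e' else 0.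
Definition bw (e : E) : int := if tgt N e == w then (-1) ^+ Lw e else 0.

Lemma chain_eq e s : chain Aw bw e s =
  if walk N (tgt N e) s w then (-1) ^+ (Jsum e s + Lw (last e s)) else 0.
Proof.
elim: s e => [|e' s IH] e /=; first by rewrite /bw add0n.
rewrite IH /Aw eq_sym; case: (src N e' == tgt N e); last by rewrite mul0r.
by case: walk; rewrite ?mulr0 // -exprD addnA.
Qed.

Lemma Wt_eq (P : seq E) :
  Wt alw Aw bw P = if is_path N P u w then path_sign N d P u w else 0.
Proof.
case: P => [|e s] //=.
rewrite /alw chain_eq /is_path /=; case: eqP => Hu /=; last by rewrite mul0r.
case: ifP => Hw; last by rewrite mulr0.
rewrite /path_sign path_count // mulNr -exprD addnC -signr_odd.
by case: odd; rewrite ?expr1 ?expr0 ?opprK.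
Qed.

Lemma bmeas_eq : bmeas N d u w = Ws alw Aw bw.
Proof.
apply: functional_extensionality => m; rewrite /bmeas /Ws.
rewrite [RHS]big_mkcond [LHS]big_mkcond; apply: eq_bigr => P _.
by rewrite Wt_eq; case: is_path; case: (mult P == m).
Qed.

End Geo.

Theorem proposition2p2 (R : realFieldType) (V E : finType) (N : network R V E)
  (HN : perfect_network N) (d : pt R) (Hd : generic_dir N d)
  (u w : V) (Hu : is_source N u) (Hw : is_sink N w) :
  rational_series (bmeas N d u w).
Proof. rewrite bmeas_eq; exact: Ws_rational. Qed.
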